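(* For all $f,g\in\mathcal{S}(\Omega)$, \[f\cdot g=f\cdot g^\circ_s+\mathrm{im}\,(f\cdot g'_s)\] in $\Omega\setminus\mathbb{R}$, where $\mathrm{im}\,(f\cdot g'_s)$ denotes $x\mapsto\mathrm{im}(x)\,(f\cdot g'_s)(x)$. Moreover, for all $x\in\Omega\setminus\mathbb{R}$, \[(f\cdot g)(x)=f(x)\,g^\circ_s(x)+\mathrm{im}(x)\big(f(x)\,g'_s(x)\big)-\big(\mathrm{im}(x),f'_s(x),g(x^c)\big).\]
   Context: Let $A$ be a finite-dimensional real algebra with unit $1$ ($\mathbb{R}$ identified with $\mathbb{R}1$) which is alternative (the associator $(x,y,z)=(xy)z-x(yz)$ is alternating), with a $^*$-involution $x\mapsto x^c$ (real linear, $(x^c)^c=x$, $(xy)^c=y^cx^c$, $r^c=r$ for $r\in\mathbb{R}$). Let $t(x)=x+x^c$, $n(x)=xx^c$, $\mathbb{S}_A=\{J\in A:t(J)=0,n(J)=1\}$ (assumed non-empty), $Q_A=\mathbb{R}\cup\{x\in A:t(x),n(x)\in\mathbb{R},\ 4n(x)>t(x)^2\}$; every $x\in Q_A$ is $\alpha+\beta J$ with $\alpha,\beta\in\mathbb{R}$, $J\in\mathbb{S}_A$, and $x^c=\alpha-\beta J$; $\mathrm{re}(x)=t(x)/2$, $\mathrm{im}(x)=x-\mathrm{re}(x)$. Let $D\subseteq\mathbb{C}$ be non-empty and invariant under complex conjugation and $\Omega=\{\alpha+\beta J:\alpha+i\beta\in D,\ J\in\mathbb{S}_A\}$. Let $A_{\mathbb{C}}=\{a+\imath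 b:a,b\in A\}$ with product $(a+\imath b)(a'+\imath b')=aa'-bb'+\imath(ab'+ba')$ and conjugation $\overline{a+\imath b}=a-\imath b$. A stem function is $F=F_1+\imath F_2:D\to A_{\mathbb{C}}$ with $F(\bar z)=\overline{F(z)}$; it induces the slice function $f=\mathcal{I}(F)$, $f(\alpha+\beta J)=F_1(\alpha+i\beta)+JF_2(\alpha+i\beta)$; $\mathcal{S}(\Omega)$ is the set of slice functions on $\Omega$ and the slice product is $f\cdot g=\mathcal{I}(FG)$ (pointwise product of stem functions). The spherical value of $f$ is the slice function $f^\circ_s(x)=\frac12(f(x)+f(x^c))$ on $\Omega$ and the spherical derivative is the slice function $f'_s(x)=\frac12\mathrm{im}(x)^{-1}(f(x)-f(x^c))$ on $\Omega\setminus\mathbb{R}$; slice products of functions with different domains are taken on the intersection of the domains. *)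

(* Defs.v *)
From HB Require Import structures.
From mathcomp Require Import all_boot all_order all_algebra.
From mathcomp Require Import reals.
From Stdlib Require Import ClassicalEpsilon.
Set Implicit Arguments. Unset Strict Implicit. Unset Printing Implicit Defensive.
Import Order.TTheory GRing.Theory Num.Theory.
Local Open Scope ring_scope.

(* A finite-dimensional real (vectType) space A with a bilinear unital
   alternative product and a *-involution; R is identified with R*:1. *)
Record altStarAlg (R : realType) (A : vectType R) := AltStarAlg {
  amul : A -> A -> A;
  aone : A;
  acj  : A -> A;
  one_neq0 : aone != 0;
  mulDl : forall (a : R) x y z, amul (a *: x + y) z = a *: amul x z + amul y z;
  mulDr : forall (a : R) x y z, amul x (a *: y + z) = a *: amul x y + amul x z;
  mul1l : forall x, amul aone x = x;
  mul1r : forall x, amul x aone = x;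
  alt_xxy : forall x y, amul (amul x x) y - amul x (amul x y) = 0;
  alt_xyx : forall x y, amul (amul x y) x - amul x (amul y x) = 0;
  alt_yxx : forall x y, amul (amul y x) x - amul y (amul x x) = 0;
  cj_lin : forall (a : R) x y, acj (a *: x + y) = a *: acj x + acj y;
  cjK : forall x, acj (acj x) = x;
  cj_mul : forall x y, acj (amul x y) = amul (acj y) (acj x);
  cj_real : forall a : R, acj (a *: aone) = a *: aone
}.

Section Defs.
Variables (R : realType) (A : vectType R) (M : altStarAlg A).

Local Notation "x ** y" := (amul M x y) (at level 40, left associativity).

Definition assoc (x y z : A) : A := (x ** y) ** z - x ** (y ** z).
Definition tr (x : A) : A := x + acj M x.
Definition nrm (x : A) : A := x ** acj M x.
Definition inS (J : A) : Prop := tr J = 0 /\ nrm J = aone M.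
Definition repart (x : A) : A := 2^-1 *: tr x.
Definition impart (x : A) : A := x - repart x.
Definition ainv (y : A) : A :=
  epsilon (inhabits 0) (fun z => y ** z = aone M /\ z ** y = aone M).

Definition pt (a b : R) (J : A) : A := a *: aone M + b *: J.

(* D subset C is encoded as a predicate on pairs (alpha, beta) ~ alpha + i beta *)
Definition in_dom (D : R -> R -> Prop) (x : A) : Prop :=
  exists a b J, D a b /\ inS J /\ x = pt a b J.
(* D minus the real axis (so that Omega_{nonreal D} = Omega_D \ R) *)
Definition nonreal (D : R -> R -> Prop) : R -> R -> Prop :=
  fun a b => D a b /\ b != 0.

(* stem functions F = F1 + i F2 : D -> A_C, encoded as pairs (F1, F2) *)
Definition is_stem (D : R -> R -> Prop) (F : R -> R -> A * A) : Prop :=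
  forall a b, D a b -> F a (- b) = ((F a b).1, - (F a b).2).

Definition slice_with (D : R -> R -> Prop) (f : A -> A) (F : R -> R -> A * A) :=
  is_stem D F /\
  forall a b J, D a b -> inS J -> f (pt a b J) = (F a b).1 + J ** (F a b).2.

Definition is_slice (D : R -> R -> Prop) (f : A -> A) : Prop :=
  exists F, slice_with D f F.

Definition ind (D : R -> R -> Prop) (F : R -> R -> A * A) (x : A) : A :=
  let t := epsilon (inhabits (0, 0, 0))
             (fun t : R * R * A => D t.1.1 t.1.2 /\ inS t.2 /\ x = pt t.1.1 t.1.2 t.2) in
  (F t.1.1 t.1.2).1 + t.2 ** (F t.1.1 t.1.2).2.

Definition stem_of (D : R -> R -> Prop) (f : A -> A) : R -> R -> A * A :=
  epsilon (inhabits (fun _ _ => (0, 0))) (fun F => slice_with D f F).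

Definition stem_mul (F G : R -> R -> A * A) : R -> R -> A * A :=
  fun a b => ((F a b).1 ** (G a b).1 - (F a b).2 ** (G a b).2,
              (F a b).1 ** (G a b).2 + (F a b).2 ** (G a b).1).

Definition slice_prod (D : R -> R -> Prop) (f g : A -> A) : A -> A :=
  ind D (stem_mul (stem_of D f) (stem_of D g)).

Definition sph_val (f : A -> A) (x : A) : A := 2^-1 *: (f x + f (acj M x)).
Definition sph_der (f : A -> A) (x : A) : A :=
  2^-1 *: (ainv (impart x) ** (f x - f (acj M x))).

End Defs.

(* Main.v *)
Require Import Defs.
From HB Require Import structures.
From mathcomp Require Import all_boot all_order all_algebra.
From mathcomp Require Import reals lra.
From Stdlib Require Import ClassicalEpsilon.
Set Implicit Arguments. Unset Strict Implicit. Unset Printing Implicit Defensive.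
Import Order.TTheory GRing.Theory Num.Theory.
Local Open Scope ring_scope.
Section Aux.
Variables (R : realType) (A : vectType R) (M : altStarAlg A).
Local Notation "x ** y" := (amul M x y) (at level 40, left associativity).
Local Notation e := (aone M).

Lemma dbl0 (x : A) : x = x + x -> x = 0.
Proof. by move=> h; rewrite -[RHS](subrr x) {2}h addrK. Qed.
Lemma mDl x y z : (x + y) ** z = x ** z + y ** z.
Proof. by have := mulDl M 1 x y z; rewrite !scale1r. Qed.
Lemma mDr x y z : x ** (y + z) = x ** y + x ** z.
Proof. by have := mulDr M 1 x y z; rewrite !scale1r. Qed.
Lemma m0l z : 0 ** z = 0.
Proof. by have := mDl 0 0 z; rewrite addr0; apply: dbl0. Qed.
Lemma m0r z : z ** 0 = 0.
Proof. by have := mDr z 0 0; rewrite addr0; apply: dbl0. Qed.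
Lemma mZl (a : R) x z : (a *: x) ** z = a *: (x ** z).
Proof. by have := mulDl M a x 0 z; rewrite !addr0 m0l addr0. Qed.
Lemma mZr (a : R) x z : z ** (a *: x) = a *: (z ** x).
Proof. by have := mulDr M a z x 0; rewrite !addr0 m0r addr0. Qed.
Lemma mNl x z : (- x) ** z = - (x ** z).
Proof. by rewrite -scaleN1r mZl scaleN1r. Qed.
Lemma mNr x z : z ** (- x) = - (z ** x).
Proof. by rewrite -scaleN1r mZr scaleN1r. Qed.
Lemma mBl x y z : (x - y) ** z = x ** z - y ** z.
Proof. by rewrite mDl mNl. Qed.
Lemma mBr x y z : z ** (x - y) = z ** x - z ** y.
Proof. by rewrite mDr mNr. Qed.

Lemma cj0 : acj M 0 = 0.
Proof. by have := cj_lin M 1 0 0; rewrite !scale1r addr0; apply: dbl0. Qed.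
Lemma cjD x y : acj M (x + y) = acj M x + acj M y.
Proof. by have := cj_lin M 1 x y; rewrite !scale1r. Qed.
Lemma cjZ (a : R) x : acj M (a *: x) = a *: acj M x.
Proof. by have := cj_lin M a x 0; rewrite !addr0 cj0 addr0. Qed.
Lemma cj1 : acj M e = e.
Proof. by have := cj_real M 1; rewrite !scale1r. Qed.

Lemma inS_cj J : inS M J -> acj M J = - J.
Proof. by case; rewrite /tr => /eqP; rewrite addrC addr_eq0 => /eqP. Qed.
Lemma inS_sq J : inS M J -> J ** J = - e.
Proof. move=> SJ; case: (SJ) => _; rewrite /nrm inS_cj // mNr => <-; by rewrite opprK. Qed.
Lemma inS_JJ J y : inS M J -> J ** (J ** y) = - y.
Proof.
move=> SJ; have := alt_xxy M J y; move/eqP; rewrite subr_eq0 => /eqP <-.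
by rewrite inS_sq // mNl mul1l.
Qed.
Lemma cjN x : acj M (- x) = - acj M x.
Proof. by rewrite -scaleN1r cjZ scaleN1r. Qed.
Lemma inSN J : inS M J -> inS M (- J).
Proof.
move=> SJ; have [h1 h2] := SJ; split.
  by move: h1; rewrite /tr cjN -opprD => ->; rewrite oppr0.
by rewrite /nrm cjN mNl mNr opprK.
Qed.

Lemma cj_pt a b J : inS M J -> acj M (pt M a b J) = pt M a (- b) J.
Proof. by move=> SJ; rewrite /pt cjD !cjZ cj1 inS_cj // scaleNr scalerN. Qed.

Lemma half_twice (x : A) : 2^-1 *: (x + x) = x.
Proof.
rewrite -[x + x]mulr2n -scaler_nat scalerA mulVf ?scale1r //.
by rewrite pnatr_eq0.
Qed.

Lemma tr_pt a b J : inS M J -> tr M (pt M a b J) = (a + a) *: e.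
Proof.
move=> SJ; rewrite /tr cj_pt // /pt scaleNr scalerDl.
by rewrite addrACA subrr addr0.
Qed.

Lemma impart_pt a b J : inS M J -> impart M (pt M a b J) = b *: J.
Proof.
move=> SJ; rewrite /impart /repart tr_pt // scalerDl half_twice /pt.
by rewrite addrC addKr.
Qed.

End Aux.

Section Aux2.
Variables (R : realType) (A : vectType R) (M : altStarAlg A).
Local Notation "x ** y" := (amul M x y) (at level 40, left associativity).
Local Notation e := (aone M).
Local Notation as3 := (assoc M).

Lemma aD1 x x' y z : as3 (x + x') y z = as3 x y z + as3 x' y z.
Proof. by rewrite /assoc !mDl opprD addrACA. Qed.
Lemma aD2 x y y' z : as3 x (y + y') z = as3 x y z + as3 x y' z.
Proof. by rewrite /assoc !mDr !mDl !mDr opprD addrACA. Qed.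
Lemma aD3 x y z z' : as3 x y (z + z') = as3 x y z + as3 x y z'.
Proof. by rewrite /assoc !mDr opprD addrACA. Qed.
Lemma aZ1 (c : R) x y z : as3 (c *: x) y z = c *: as3 x y z.
Proof. by rewrite /assoc !mZl scalerBr. Qed.
Lemma aZ2 (c : R) x y z : as3 x (c *: y) z = c *: as3 x y z.
Proof. by rewrite /assoc !mZl !mZr mZl scalerBr. Qed.
Lemma aZ3 (c : R) x y z : as3 x y (c *: z) = c *: as3 x y z.
Proof. by rewrite /assoc !mZr scalerBr. Qed.
Lemma aN1 x y z : as3 (- x) y z = - as3 x y z.
Proof. by rewrite -scaleN1r aZ1 scaleN1r. Qed.
Lemma axxy x y : as3 x x y = 0.
Proof. exact: alt_xxy. Qed.
Lemma axyx x y : as3 x y x = 0.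
Proof. exact: alt_xyx. Qed.
Lemma ayxx x y : as3 y x x = 0.
Proof. exact: alt_yxx. Qed.
Lemma sum0 (p q : A) : p + q = 0 -> q = - p.
Proof. by move=> h; apply/eqP; rewrite -addr_eq0 addrC h. Qed.
Lemma a12 x y z : as3 y x z = - as3 x y z.
Proof.
have := axxy (x + y) z; rewrite aD1 !aD2 !axxy add0r addr0; exact: sum0.
Qed.
Lemma a23 x y z : as3 x z y = - as3 x y z.
Proof.
have := ayxx (y + z) x; rewrite aD2 !aD3 !ayxx add0r addr0; exact: sum0.
Qed.
Lemma a13 x y z : as3 z y x = - as3 x y z.
Proof. by rewrite a12 a23 a12 opprK. Qed.
Lemma a1s (c : R) y z : as3 (c *: e) y z = 0.
Proof. by rewrite aZ1 /assoc !mul1l subrr scaler0. Qed.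

Lemma teich w x y z :
  as3 (w ** x) y z - as3 w (x ** y) z + as3 w x (y ** z)
  = w ** as3 x y z + as3 w x y ** z.
Proof.
rewrite /assoc mBr mBl.
set p1 := (w ** x ** y) ** z; set p2 := (w ** x) ** (y ** z).
set p3 := (w ** (x ** y)) ** z; set p4 := w ** ((x ** y) ** z).
set p5 := w ** (x ** (y ** z)).
rewrite opprB addrACA subrK [LHS]addrC (addrAC p4) -addrA [- p3 + _]addrC //.
Qed.

Lemma assocL x y z : (x ** y) ** z = x ** (y ** z) + as3 x y z.
Proof. by rewrite /assoc addrC subrK. Qed.
Lemma assocR x y z : x ** (y ** z) = (x ** y) ** z - as3 x y z.
Proof. by rewrite /assoc opprB addrC subrK. Qed.

Lemma E1 J p q : inS M J -> as3 J (J ** p) q = - (J ** as3 J p q).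
Proof.
move=> SJ; have := teich J J p q.
rewrite inS_sq // -[- e]scaleN1r a1s !axxy m0l sub0r !addr0.
by move=> h; rewrite -h opprK.
Qed.

Lemma keyid J u v : inS M J ->
  J ** ((J ** u) ** v) + (J ** u) ** (J ** v) - J ** (u ** (J ** v)) = - (u ** v).
Proof.
move=> SJ.
set a := as3 J u v.
have F1 : as3 (J ** u) J v = J ** a by rewrite a12 E1 // opprK.
have F2 : as3 J (u ** J) v = J ** a.
  have := teich J u J v.
  rewrite F1 axyx m0l addr0 (a23 J (J ** v) u) E1 // (a23 J u v) -/a mNr opprK (a12 J u v) -/a mNr.
  by rewrite addrAC subrr sub0r => /oppr_inj.
have hJuJ : (J ** u) ** J = J ** (u ** J).
  by have := axyx J u; move/eqP; rewrite subr_eq0 => /eqP.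
rewrite assocL mDr inS_JJ // (assocR (J ** u)) hJuJ assocL F2 F1.
rewrite (assocR u) (a12 J u v) -/a opprK mDr.
set c := J ** (u ** J ** v); set b := J ** a.
by rewrite addrK opprD addrA addrK addrK.
Qed.


Lemma aN3 x y z : as3 x y (- z) = - as3 x y z.
Proof. by rewrite -scaleN1r aZ3 scaleN1r. Qed.

Ltac zstep :=
  lazymatch goal with
  | |- _ + (- ?u) = 0 => rewrite ?(addrAC _ u); rewrite subrK
  | |- _ + ?u = 0 => rewrite ?(addrAC _ (- u)); rewrite addrK
  end.
Ltac zsolve :=
  apply/eqP; rewrite -subr_eq0 ?opprD ?opprK ?addrA; apply/eqP;
  lazymatch goal with |- ?S = 0 => rewrite -[S]add0r ?addrA end;
  repeat zstep; done.

Lemma part1alg J (b : R) f1 f2 g1 g2 : inS M J -> b != 0 ->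
  (f1 ** g1 - f2 ** g2) + J ** (f1 ** g2 + f2 ** g1) =
  (f1 ** g1 - f2 ** 0) + J ** (f1 ** 0 + f2 ** g1) +
  (b *: J) ** ((f1 ** (b^-1 *: g2) - f2 ** 0) + J ** (f1 ** 0 + f2 ** (b^-1 *: g2))).
Proof.
move=> SJ bnz.
rewrite !m0r !subr0 !add0r !mZr -scalerDr mZl mZr scalerA mulfV // scale1r.
rewrite !mDr inS_JJ //.
zsolve.
Qed.

Lemma part2alg J (b : R) f1 f2 g1 g2 : inS M J -> b != 0 ->
  (f1 ** g1 - f2 ** g2) + J ** (f1 ** g2 + f2 ** g1) =
  (f1 + J ** f2) ** g1 + (b *: J) ** ((f1 + J ** f2) ** (b^-1 *: g2))
  - as3 (b *: J) (b^-1 *: f2) (g1 - J ** g2).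
Proof.
move=> SJ bnz.
rewrite mZl !mZr scalerA mulfV // scale1r aZ1 aZ2 scalerA mulfV // scale1r.
rewrite aD3 aN3 /assoc !mDl !mDr.
rewrite -(keyid f2 g2 SJ).
zsolve.
Qed.
End Aux2.

Section Aux3.
Variables (R : realType) (A : vectType R) (M : altStarAlg A).
Local Notation "x ** y" := (amul M x y) (at level 40, left associativity).
Local Notation e := (aone M).

Lemma scaleeI (c d : R) : c *: e = d *: e -> c = d.
Proof.
move=> h; apply/eqP; rewrite -subr_eq0; apply/eqP.
have : (c - d) *: e = 0 by rewrite scalerBl h subrr.
by move/eqP; rewrite scaler_eq0 (negbTE (one_neq0 M)) orbF => /eqP.
Qed.

Lemma pt_inj a b J a' b' J' : inS M J -> inS M J' -> b != 0 ->
  pt M a b J = pt M a' b' J' ->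
  a' = a /\ ((b' = b /\ J' = J) \/ (b' = - b /\ J' = - J)).
Proof.
move=> SJ SJ' bnz h.
have ha : a' = a.
  have := congr1 (tr M) h; rewrite !tr_pt // => /scaleeI; lra.
subst a'; split => //.
have hb : b *: J = b' *: J' by move: h; rewrite /pt => /addrI.
have := congr1 (fun y => y ** y) hb; rewrite /= !mZl !mZr !scalerA !inS_sq //.
rewrite !scalerN => /oppr_inj /scaleeI hbb.
have : (b' - b) * (b' + b) == 0 by apply/eqP; lra.
rewrite mulf_eq0 => /orP [] /eqP hb'.
  have eb : b' = b by lra.
  subst b'; left; split => //; exact: (scalerI bnz).
have eb : b' = - b by lra.
subst b'; right; split => //; apply: (scalerI bnz).
by rewrite scalerN hb scaleNr opprK.
Qed.

Lemma ind_pt D K a b J : is_stem D K -> D a b -> b != 0 -> inS M J ->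
  ind M D K (pt M a b J) = (K a b).1 + J ** (K a b).2.
Proof.
move=> sK Dab bnz SJ.
rewrite /ind.
set t := epsilon _ _.
have [Dt [St Ht]] : D t.1.1 t.1.2 /\ inS M t.2 /\ pt M a b J = pt M t.1.1 t.1.2 t.2.
  exact: (epsilon_spec _ (fun t : R * R * A => D t.1.1 t.1.2 /\ inS M t.2 /\ pt M a b J = pt M t.1.1 t.1.2 t.2) (ex_intro _ (a, b, J) (conj Dab (conj SJ erefl)))).
move: t Dt St Ht => [[a' b'] J'] /= Dt St Ht.
have [-> [[-> ->]|[-> ->]]] := pt_inj SJ St bnz Ht => //.
by rewrite (sK _ _ Dab) /= mNl mNr opprK.
Qed.


Lemma stem_of_spec D h : is_slice M D h -> slice_with M D h (stem_of M D h).
Proof. by move=> [K hK]; apply: epsilon_spec; exists K. Qed.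

Lemma slice_pt D h K a b J : slice_with M D h K -> D a b -> inS M J ->
  h (pt M a b J) = (K a b).1 + J ** (K a b).2.
Proof. by move=> [_ hK] Dab SJ; rewrite hK. Qed.

Lemma slice_ptN D h K a b J : slice_with M D h K -> D a b -> D a (- b) -> inS M J ->
  h (pt M a (- b) J) = (K a b).1 - J ** (K a b).2.
Proof. by move=> [sK hK] Dab Dab' SJ; rewrite hK // sK //= mNr. Qed.

Lemma slice_uniq D h K K' J0 a b : (forall a b, D a b -> D a (- b)) -> inS M J0 ->
  slice_with M D h K -> slice_with M D h K' -> D a b -> K a b = K' a b.
Proof.
move=> HD SJ sK sK' Dab.
have e1 := slice_pt sK Dab SJ; rewrite (slice_pt sK' Dab SJ) in e1.
have e2 := slice_ptN sK Dab (HD _ _ Dab) SJ; rewrite (slice_ptN sK' Dab (HD _ _ Dab) SJ) in e2.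
have h1 : (K a b).1 = (K' a b).1.
  have := congr2 (fun p q => 2^-1 *: (p + q)) e1 e2.
  by rewrite /= addrACA subrr addr0 [in RHS]addrACA subrr addr0 !half_twice.
have h2 : (K a b).2 = (K' a b).2.
  move: e1; rewrite h1 => /addrI /(congr1 (amul M J0)); rewrite !inS_JJ //.
  by move/oppr_inj.
by move: h1 h2; case: (K a b); case: (K' a b) => /= ? ? ? ? -> ->.
Qed.

Lemma sphval_pt D h K a b J : slice_with M D h K -> D a b -> D a (- b) -> inS M J ->
  sph_val M h (pt M a b J) = (K a b).1.
Proof.
move=> sK Dab Dab' SJ.
by rewrite /sph_val cj_pt // (slice_pt sK Dab SJ) (slice_ptN sK Dab Dab' SJ)
  addrACA subrr addr0 half_twice.
Qed.

Lemma ainv_pt (b : R) J : inS M J -> b != 0 -> ainv M (b *: J) = (- b^-1) *: J.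
Proof.
move=> SJ bnz; rewrite /ainv.
set z := epsilon _ _.
have [h1 _] : (b *: J) ** z = e /\ z ** (b *: J) = e.
  rewrite /z; apply: (epsilon_spec _ (fun z => (b *: J) ** z = e /\ z ** (b *: J) = e)).
  exists ((- b^-1) *: J).
  rewrite !mZl !mZr !scalerA inS_sq // mulrN mulNr mulfV // mulVf //.
  by rewrite scaleN1r opprK.
move: h1; rewrite mZl => /(congr1 (fun y => b^-1 *: y)); rewrite scalerA mulVf // scale1r.
move/(congr1 (amul M J)); rewrite inS_JJ // mZr Defs.mul1r => /eqP.
by rewrite eqr_oppLR -scaleNr => /eqP.
Qed.

Lemma sphder_pt D h K a b J : slice_with M D h K -> D a b -> D a (- b) -> inS M J ->
  b != 0 -> sph_der M h (pt M a b J) = b^-1 *: (K a b).2.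
Proof.
move=> sK Dab Dab' SJ bnz.
rewrite /sph_der cj_pt // (slice_pt sK Dab SJ) (slice_ptN sK Dab Dab' SJ).
have -> : forall x y : A, x + y - (x - y) = y + y.
  by move=> x y; rewrite opprB addrC addrA subrK.
rewrite impart_pt // ainv_pt // mZl mDr inS_JJ // scalerA mulrC -scalerA half_twice.
by rewrite scaleNr scalerN opprK.
Qed.

Lemma stem_mul_stem (D : R -> R -> Prop) (K K' : R -> R -> A * A) : is_stem D K -> is_stem D K' -> is_stem D (stem_mul M K K').
Proof.
move=> sK sK' a b Dab; rewrite /stem_mul (sK _ _ Dab) (sK' _ _ Dab) /=.
by rewrite !mNl !mNr opprK opprD.
Qed.

End Aux3.

Unset Implicit Arguments.

Theorem theorem3p4 (R : realType) (A : vectType R) (M : altStarAlg A)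
  (D : R -> R -> Prop)
  (HDne : exists a b, D a b)
  (HDc : forall a b, D a b -> D a (- b))
  (HS : exists J, inS M J)
  (f g : A -> A) (Hf : is_slice M D f) (Hg : is_slice M D g) :
  (forall x, in_dom M (nonreal D) x ->
     slice_prod M D f g x =
       slice_prod M D f (sph_val M g) x
       + amul M (impart M x) (slice_prod M (nonreal D) f (sph_der M g) x))
  /\
  (forall x, in_dom M (nonreal D) x ->
     slice_prod M D f g x =
       amul M (f x) (sph_val M g x)
       + amul M (impart M x) (amul M (f x) (sph_der M g x))
       - assoc M (impart M x) (sph_der M f x) (g (acj M x))).
Proof.
have [J0 SJ0] := HS.
have HDn : forall a b, nonreal D a b -> nonreal D a (- b).
  by move=> a b [Dab bnz]; split; [exact: HDc | rewrite oppr_eq0].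
set F := stem_of M D f; set G := stem_of M D g.
have sF : slice_with M D f F := stem_of_spec Hf.
have sG : slice_with M D g G := stem_of_spec Hg.
have restr : forall h K, slice_with M D h K -> slice_with M (nonreal D) h K.
  move=> h K [sK hK]; split; first by move=> a b [Dab _]; exact: sK.
  by move=> a b J [Dab _]; exact: hK.
have sFG := stem_mul_stem M sF.1 sG.1.
split => x [a [b [J [[Dab bnz] [SJ ->]]]]].
- set S := stem_of M D (sph_val M g).
  have sS0 : slice_with M D (sph_val M g) (fun a b => ((G a b).1, 0)).
    split.
      by move=> a' b' D'; rewrite /= oppr0 (sG.1 _ _ D').
    by move=> a' b' J' D' SJ'; rewrite (sphval_pt sG D' (HDc _ _ D') SJ') /= m0r addr0.
  have sS : slice_with M D (sph_val M g) S := stem_of_spec (ex_intro _ _ sS0).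
  have eS : S a b = ((G a b).1, 0) := slice_uniq HDc SJ0 sS sS0 Dab.
  set F' := stem_of M (nonreal D) f.
  have sF' : slice_with M (nonreal D) f F' := stem_of_spec (ex_intro _ _ (restr _ _ sF)).
  have eF' : F' a b = F a b := slice_uniq HDn SJ0 sF' (restr _ _ sF) (conj Dab bnz).
  set T := stem_of M (nonreal D) (sph_der M g).
  have sT0 : slice_with M (nonreal D) (sph_der M g) (fun a b => (b^-1 *: (G a b).2, 0)).
    split.
      by move=> a' b' [D' b'nz] /=; rewrite oppr0 (sG.1 _ _ D') /= invrN scaleNr scalerN opprK.
    move=> a' b' J' [D' b'nz] SJ'.
    by rewrite (sphder_pt sG D' (HDc _ _ D') SJ' b'nz) /= m0r addr0.
  have sT : slice_with M (nonreal D) (sph_der M g) T := stem_of_spec (ex_intro _ _ sT0).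
  have eT : T a b = (b^-1 *: (G a b).2, 0) := slice_uniq HDn SJ0 sT sT0 (conj Dab bnz).
  rewrite /slice_prod -/F -/G -/S -/F' -/T.
  rewrite (ind_pt sFG Dab bnz SJ).
  rewrite (ind_pt (stem_mul_stem M sF.1 sS.1) Dab bnz SJ).
  rewrite (ind_pt (stem_mul_stem M sF'.1 sT.1) (conj Dab bnz) bnz SJ).
  rewrite impart_pt // /stem_mul /= eS eF' eT /=.
  exact: part1alg.
- rewrite /slice_prod -/F -/G (ind_pt sFG Dab bnz SJ).
  rewrite (slice_pt sF Dab SJ) (sphval_pt sG Dab (HDc _ _ Dab) SJ).
  rewrite (sphder_pt sG Dab (HDc _ _ Dab) SJ bnz) (sphder_pt sF Dab (HDc _ _ Dab) SJ bnz).
  rewrite impart_pt // cj_pt // (slice_ptN sG Dab (HDc _ _ Dab) SJ) /stem_mul /=.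
  exact: part2alg.
Qed.
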